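(* Let $T:\mathbb{R}_+^N\to\mathbb{R}_{++}^N$ be a standard interference mapping, let $\|\cdot\|_a$ and $\|\cdot\|_b$ be monotone norms on $\mathbb{R}^N$, and let $E$ be the $\|\cdot\|_b$-energy efficiency function defined in the context. Then $E$ is non-increasing: for all $\bar p_1>\bar p_2>0$, $E(\bar p_1)\le E(\bar p_2)$.
   Context: Vector inequalities are coordinatewise; $\mathbb{R}_+$, $\mathbb{R}_{++}$ denote nonnegative and positive reals. A norm $\|\cdot\|$ on $\mathbb{R}^N$ is monotone if $\mathbf{0}\le\mathbf{x}\le\mathbf{y}$ implies $\|\mathbf{x}\|\le\|\mathbf{y}\|$. A function $f:\mathbb{R}^N\to\mathbb{R}_{++}\cup\{\infty\}$ is a standard interference function if: (1) for all $\mathbf{x}\in\mathbb{R}_+^N$ and all $\alpha>1$, $\alpha f(\mathbf{x})>f(\alpha\mathbf{x})$; (2) for all $\mathbf{x}_1,\mathbf{x}_2\in\mathbb{R}_+^N$, $\mathbf{x}_1\ge\mathbf{x}_2$ implies $f(\mathbf{x}_1)\ge f(\mathbf{x}_2)$; (3) $f(\mathbf{x})=\infty$ iff $\mathbf{x}\notin\mathbb{R}_+^N$. A standard interference mapping is $T:\mathbb{R}_+^N\to\mathbb{R}_{++}^N$, $T(\mathbf{x})=(t_1(\mathbf{x}),\dots,t_N(\mathbf{x}))$, with each $t_i$ a standard interference function. For a power budget $\bar p>0$, consider the problem: maximize $c$ over $(\mathbf{p},c)\in\mathbb{R}_+^N\times\mathbb{R}_{++}$ subject to $\mathbf{p}=cT(\mathbf{p})$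 and $\|\mathbf{p}\|_a\le\bar p$. It is known that this problem has a unique solution $(\mathbf{p}_{\bar p},c_{\bar p})\in\mathbb{R}_{++}^N\times\mathbb{R}_{++}$, and that $\bar p_1>\bar p_2>0$ implies $\mathbf{p}_{\bar p_1}>\mathbf{p}_{\bar p_2}$ coordinatewise. Define $U(\bar p):=c_{\bar p}$, $P(\bar p):=\mathbf{p}_{\bar p}$, and $E(\bar p):=U(\bar p)/\|P(\bar p)\|_b$, which equals $1/\|T(\mathbf{p}_{\bar p})\|_b$. *)

(* Defs.v *)
From mathcomp Require Import all_boot all_order all_algebra.
From mathcomp Require Import reals.
Set Implicit Arguments. Unset Strict Implicit. Unset Printing Implicit Defensive.
Import Order.TTheory GRing.Theory Num.Theory.
Local Open Scope ring_scope.

Section Defs.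
Variables (R : realType) (N : nat).
Notation vec := ('I_N -> R).

Definition vle (x y : vec) : Prop := forall i, x i <= y i.
Definition vlt (x y : vec) : Prop := forall i, x i < y i.
Definition vzero : vec := fun _ => 0.
Definition vscale (c : R) (x : vec) : vec := fun i => c * x i.
Definition vadd (x y : vec) : vec := fun i => x i + y i.

Definition is_norm (nu : vec -> R) : Prop :=
  [/\ (forall x, 0 <= nu x),
      (forall x, nu x = 0 -> x = vzero),
      (forall c x, nu (vscale c x) = `|c| * nu x)
    & (forall x y, nu (vadd x y) <= nu x + nu y)].

Definition monotone_norm (nu : vec -> R) : Prop :=
  is_norm nu /\ forall x y, vle vzero x -> vle x y -> nu x <= nu y.

(* A standard interference function, restricted to its effective domain R_+^N
   (outside R_+^N it is +oo by axiom (3), so only values on R_+^N matter). *)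
Definition std_interference_fun (f : vec -> R) : Prop :=
  [/\ (forall x, vle vzero x -> 0 < f x),
      (forall x alpha, vle vzero x -> 1 < alpha -> f (vscale alpha x) < alpha * f x)
    & (forall x1 x2, vle vzero x2 -> vle x2 x1 -> f x2 <= f x1)].

Definition std_interference_map (T : vec -> vec) : Prop :=
  forall i, std_interference_fun (fun x => T x i).

Definition feasible (T : vec -> vec) (na : vec -> R) (pbar : R) (p : vec) (c : R)
  : Prop :=
  [/\ vle vzero p, 0 < c, (forall i, p i = c * T p i) & na p <= pbar].

Definition is_solution (T : vec -> vec) (na : vec -> R) (pbar : R) (p : vec) (c : R)
  : Prop :=
  feasible T na pbar p c /\ forall p' c', feasible T na pbar p' c' -> c' <= c.

Definition energy_eff (nb : vec -> R) (U : R -> R) (P : R -> vec) (pbar : R) : R :=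
  U pbar / nb (P pbar).

End Defs.

(* Main.v *)
Require Import Defs.
From mathcomp Require Import all_boot all_order all_algebra.
From mathcomp Require Import reals.
Import Order.TTheory GRing.Theory Num.Theory.
Local Open Scope ring_scope.

Lemma key (R : realType) (N : nat) (T : ('I_N -> R) -> ('I_N -> R))
  (p1 p2 : 'I_N -> R) (c1 c2 : R) :
  std_interference_map T -> vle (@vzero R N) p1 -> vle (@vzero R N) p2 ->
  0 < c2 -> c2 <= c1 ->
  (forall i, p1 i = c1 * T p1 i) -> (forall i, p2 i = c2 * T p2 i) ->
  vle p2 p1.
Proof.
move=> HT h1 h2 c2p c21 e1 e2 i0.
have Tp : forall x, vle (@vzero R N) x -> forall i, 0 < T x i.
  by move=> x hx i; case: (HT i) => H _ _; exact: H.
have p1p : forall k, 0 < p1 k.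
  move=> k; rewrite e1 mulr_gt0 //; [exact: lt_le_trans c21| exact: Tp].
pose r := fun k => p2 k / p1 k.
case: (@arg_maxP _ R _ i0 xpredT r isT) => j _ Hj.
have Hr : forall k, r k <= r j by move=> k; exact: Hj.
case: (leP (r j) 1) => ha.
  have := le_trans (Hr i0) ha; rewrite /r ler_pdivrMr // mul1r //.
set alpha := r j in Hr ha.
have q0 : vle (@vzero R N) (vscale alpha p1).
  move=> k; rewrite /vscale /vzero mulr_ge0 //; last exact: ltW.
  by apply: ltW; exact: lt_trans ha.
have le2q : vle p2 (vscale alpha p1).
  by move=> k; rewrite /vscale -ler_pdivrMr // ; exact: Hr.
have eaj : alpha * p1 j = p2 j by rewrite /alpha /r mulfVK // gt_eqF.
have : p2 j < p2 j.
  rewrite {1}e2.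
  apply: (@le_lt_trans _ _ (c2 * T (vscale alpha p1) j)).
    rewrite ler_pM2l //. by case: (HT j) => _ _ H; apply: H.
  apply: (@lt_le_trans _ _ (c2 * (alpha * T p1 j))).
    rewrite ltr_pM2l //. by case: (HT j) => _ H _; apply: H.
  rewrite -eaj e1 mulrCA ler_pM2l; last exact: lt_trans ha.
  by rewrite ler_pM2r //; exact: Tp.
by rewrite ltxx.
Qed.

Theorem lemma2 (R : realType) (N : nat) (T : ('I_N -> R) -> ('I_N -> R))
  (na nb : ('I_N -> R) -> R) (U : R -> R) (P : R -> ('I_N -> R)) :
  std_interference_map T ->
  monotone_norm na -> monotone_norm nb ->
  (forall pbar, 0 < pbar -> is_solution T na pbar (P pbar) (U pbar)) ->
  forall pbar1 pbar2, 0 < pbar2 -> pbar2 < pbar1 ->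
    energy_eff nb U P pbar1 <= energy_eff nb U P pbar2.
Proof.
move=> HT [Hna Hmona] [Hnb Hmonb] Hsol q1 q2 h2 h21.
have h1 : 0 < q1 by exact: lt_trans h21.
have [[P1ge U1p P1eq na1] S1] := Hsol q1 h1.
have [[P2ge U2p P2eq na2] S2] := Hsol q2 h2.
have Uc : U q2 <= U q1.
  apply: (S1 (P q2)); split => //; apply: le_trans na2 _; exact: ltW.
have Tp : forall x, vle (@vzero R N) x -> forall i, 0 < T x i.
  by move=> x hx i; case: (HT i) => H _ _; exact: H.
have Tmon : forall x y, vle (@vzero R N) x -> vle x y -> vle (T x) (T y).
  by move=> x y hx hxy i; case: (HT i) => _ _ H; apply: H.
have P21 : vle (P q2) (P q1) by exact: (@key R N T _ _ _ _ HT P1ge P2ge U2p Uc P1eq P2eq).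
have T0 : forall q, vle (@vzero R N) (P q) -> vle (@vzero R N) (T (P q)).
  by move=> q hq i; apply: ltW; exact: Tp.
have nbE : forall q, 0 < U q -> vle (@vzero R N) (P q) ->
    (forall i, P q i = U q * T (P q) i) -> nb (P q) = U q * nb (T (P q)).
  move=> q Up Pge Peq.
  have -> : U q * nb (T (P q)) = nb (vscale (U q) (T (P q))).
    by case: Hnb => _ _ H _; rewrite H gtr0_norm.
  apply/eqP; rewrite eq_le; apply/andP; split; apply: Hmonb => //.
  - by move=> i; rewrite Peq.
  - by move=> i; rewrite /vscale mulr_ge0 //; [exact: ltW | apply: ltW; exact: Tp].
  - by move=> i; rewrite Peq.
rewrite /energy_eff (nbE q1) // (nbE q2) // !invfM !mulrA !divff ?gt_eqF // !mul1r.
have nle : nb (T (P q2)) <= nb (T (P q1)) by apply: Hmonb; [exact: T0 | exact: Tmon].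
case: (ltP 0 (nb (T (P q2)))) => hp.
  by rewrite lef_pV2 // ?posrE // (lt_le_trans hp nle).
have z2 : nb (T (P q2)) = 0 by apply/eqP; rewrite eq_le hp; case: Hnb => H _ _ _; rewrite H.
have hz : T (P q2) = @vzero R N by case: Hnb => _ H _ _; exact: H.
have nle2 : nb (T (P q1)) <= nb (T (P q2)).
  apply: Hmonb; first exact: T0.
  move=> i; have := Tp _ P2ge i; by rewrite hz /vzero ltxx.
have -> : nb (T (P q1)) = 0 by apply: le_anti; rewrite (le_trans nle2) ?z2 //=; case: Hnb => H _ _ _; exact: H.
by rewrite z2.
Qed.
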